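(* Every WM set $S\subset\mathbb{N}$ contains an IP-set, i.e. there is a sequence $p_1,p_2,\dots$ of natural numbers such that $\{p_{i_1}+\dots+p_{i_k}: k\in\mathbb{N},\ i_1<\dots<i_k\}\subset S$.
   Context: $\mathbb{N}=\{1,2,\dots\}$. An IP-set is a set of the form $\{p_{i_1}+\dots+p_{i_k}: k\in\mathbb{N},\ i_1<\dots<i_k\}$ for an infinite sequence $(p_i)$ of natural numbers (not necessarily distinct). $\Omega=\{0,1\}^{\mathbb{N}}$ with product topology and left shift $T$; $X_{1_S}$ is the closure of $\{T^n1_S:n\ge0\}$. A point $\xi$ is generic for $(X,\mu,T)$ if $\frac1N\sum_{n=0}^{N-1}f(T^n\xi)\to\int f\,d\mu$ for all continuous $f$. $d(S)=\lim_N\frac1N|S\cap\{1,\dots,N\}|$. $S$ is a WM set if for some $T$-invariant Borel probability $\mu$ on $X_{1_S}$, $1_S$ is generic for $(X_{1_S},\mu,T)$, this system is weakly mixing, and $d(S)>0$. *)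

(* Defs.v *)
From HB Require Import structures.
From mathcomp Require Import all_boot all_order all_algebra.
From mathcomp Require Import all_classical all_reals all_analysis.
Set Implicit Arguments. Unset Strict Implicit. Unset Printing Implicit Defensive.
Import Order.TTheory GRing.Theory Num.Theory numFieldNormedType.Exports.
Local Open Scope classical_set_scope.
Local Open Scope ring_scope.

(* Omega = {0,1}^N with the product topology: MathComp-Analysis' cantor_space
   (prod_topology of discrete bool over nat).  Coordinate k (0-based) of a
   point corresponds to the natural number k+1 of the paper. *)
Definition Omega : Type := cantor_space.

Definition OmegaB : Type := g_sigma_algebraType (@open cantor_space).

Definition shift (w : cantor_space) : cantor_space := fun k => w k.+1.

Definition indic (S : set nat) : cantor_space := fun k => `[< S k.+1 >].

Definition orbit_closure (xi : cantor_space) : set cantor_space :=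
  closure [set iter n shift xi | n in [set: nat]].

(* mu is a T-invariant Borel probability measure on X (represented as a Borel
   probability on Omega giving full measure to the closed set X). *)
Definition invariant_prob_on (R : realType) (X : set OmegaB)
    (mu : probability OmegaB R) : Prop :=
  mu X = 1%E /\
  forall A : set OmegaB, measurable A -> A `<=` X ->
    mu (X `&` (shift : OmegaB -> OmegaB) @^-1` A) = mu A.

Definition generic (R : realType) (X : set OmegaB) (mu : probability OmegaB R)
    (xi : cantor_space) : Prop :=
  forall f : cantor_space -> R, {within X, continuous f} ->
    (fun N : nat => ((\sum_(n < N) f (iter n shift xi)) / N%:R)%:E) @ \oo
      --> (\int[mu]_(x in X) (f x)%:E)%E.

Definition weakly_mixing (R : realType) (X : set OmegaB)
    (mu : probability OmegaB R) : Prop :=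
  forall A B : set OmegaB, measurable A -> measurable B -> A `<=` X -> B `<=` X ->
    (fun N : nat =>
       (\sum_(n < N)
          `| fine (mu (A `&` (X `&` (iter n shift : OmegaB -> OmegaB) @^-1` B)))
             - fine (mu A) * fine (mu B) |) / N%:R) @ \oo --> (0 : R).

Definition has_density (R : realType) (S : set nat) (d : R) : Prop :=
  (fun N : nat =>
     (\sum_(k < N) (if `[< S k.+1 >] then 1 else 0 : R)) / N%:R) @ \oo --> d.

Definition WM_set (R : realType) (S : set nat) : Prop :=
  exists mu : probability OmegaB R,
    invariant_prob_on (orbit_closure (indic S)) mu /\
    generic (orbit_closure (indic S)) mu (indic S) /\
    weakly_mixing (orbit_closure (indic S)) mu /\
    exists d : R, has_density S d /\ 0 < d.

Definition contains_IP_set (S : set nat) : Prop :=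
  exists p : nat -> nat, (forall i, 0 < p i)%N /\
    forall s : seq nat, s != [::] -> sorted ltn s -> S (\sum_(i <- s) p i)%N.

(* Main.v *)
Require Import Defs.
From HB Require Import structures.
From mathcomp Require Import all_boot all_order all_algebra.
From mathcomp Require Import all_classical all_reals all_analysis.
From mathcomp Require Import lra.
Set Implicit Arguments. Unset Strict Implicit. Unset Printing Implicit Defensive.
Import Order.TTheory GRing.Theory Num.Theory numFieldNormedType.Exports.
Local Open Scope classical_set_scope.
Local Open Scope ring_scope.
Notation sh := Defs.shift.

Lemma coord_near (x : cantor_space) (j : nat) : \forall y \near x, y j = x j.
Proof.
have := @proj_continuous nat (fun _ => bool) j x.
move=> /(_ [set b | b = x j]); apply.
by apply/principal_filterP.
Qed.

Lemma iter_sh n (x : cantor_space) j : iter n sh x j = x (j + n)%N.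
Proof. by elim: n x j => [|n IH] x j; rewrite ?addn0 //= /Defs.shift IH addnS. Qed.

Definition cyl (L : seq nat) : set cantor_space := [set x | forall j, j \in L -> x j].

Lemma cyl_near (L : seq nat) (x : cantor_space) :
  \forall y \near x, (forall j, j \in L -> y j = x j).
Proof.
have FF : Filter (nbhs x) := nbhs_filter x.
elim: L => [|a L IH].
  exact: (@filterE _ _ FF).
apply: filterS (filterI (coord_near x a) IH) => y [H1 H2] j.
by rewrite in_cons => /orP[/eqP->|/H2].
Qed.

Lemma sh_cont : continuous (sh : cantor_space -> cantor_space).
Proof.
move=> x; apply/cvg_sup => i.
have := @continuous_comp_initial cantor_space cantor_space bool (fun f => f i) sh.
move=> /(_ _ x); apply.
move=> y; exact: (@proj_continuous nat (fun _ => bool) i.+1 y).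
Qed.

Lemma cyl_nearE L (x : cantor_space) : \forall y \near x, (cyl L y <-> cyl L x).
Proof.
apply: filterS (cyl_near L x) => y H; split => Hc j jL.
  by rewrite -(H j jL); apply: Hc.
by rewrite (H j jL); apply: Hc.
Qed.

Lemma open_cyl L : open (cyl L).
Proof.
rewrite openE => x Ax; rewrite /interior.
by apply: filterS (cyl_nearE L x) => y [_ H]; apply: H.
Qed.

Lemma closed_cyl L : closed (cyl L).
Proof.
rewrite -openC openE => x Ax; rewrite /interior.
by apply: filterS (cyl_nearE L x) => y [H _] /H.
Qed.

Lemma cont_indic (R : realType) L : continuous (\1_(cyl L) : cantor_space -> R).
Proof.
move=> x; apply: cvg_near_cst.
apply: filterS (cyl_nearE L x) => y H.
rewrite /indic; congr (_%:R); congr nat_of_bool.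
by apply/idP/idP => /set_mem/H/mem_set.
Qed.

Lemma meas_open (A : set cantor_space) : open A -> measurable (A : set OmegaB).
Proof. by move=> oA; apply: sub_sigma_algebra. Qed.

Lemma meas_closed (A : set cantor_space) : closed A -> measurable (A : set OmegaB).
Proof.
move=> cA; rewrite -(setCK A); apply: measurableC; apply: meas_open.
by rewrite openC.
Qed.

Lemma inv_le2 (R : realType) (n : R) : 1 <= n -> n^-1 <= 2 / (n + 1).
Proof.
move=> n1.
have n0 : 0 < n by apply: lt_le_trans n1.
rewrite ler_pdivlMr ?ltr_wpDr //.
have h : n^-1 <= 1 by rewrite invr_le1 // unitf_gt0.
rewrite mulrDr mulVf ?gt_eqF // mulr1; lra.
Qed.

Lemma comb (R : realType) (b e : nat -> R) (c t : R) : 0 < c -> 0 < t ->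
  (forall n, 0 <= b n <= 1) -> (forall n, 0 <= e n) ->
  (fun N : nat => (\sum_(n < N) b n) / N%:R) @ \oo --> c ->
  (fun N : nat => (\sum_(n < N) e n) / N%:R) @ \oo --> 0 ->
  exists n, b n != 0 /\ e n.+1 < t.
Proof.
move=> c0 t0 hb he cb ce.
apply: contrapT => Hno.
have key : forall n, t * b n <= e n.+1.
  move=> n; have [->|bn0] := eqVneq (b n) 0; first by rewrite mulr0 he.
  have : ~ (e n.+1 < t) by move=> h; apply: Hno; exists n.
  move/negP; rewrite -leNgt => h.
  apply: le_trans h; rewrite ler_piMr ?(ltW t0) //; by case/andP: (hb n).
have cu : (fun N : nat => t * ((\sum_(n < N) b n) / N%:R)) @ \oo --> t * c.
  exact: cvgM (cvg_cst t) cb.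
have cv : (fun N : nat => 2 * ((\sum_(n < N.+1) e n) / N.+1%:R)) @ \oo --> (2 * 0 : R).
  have cv0 : (fun N : nat => (\sum_(n < N.+1) e n) / N.+1%:R) @ \oo --> (0:R).
    by move: ce; rewrite -(cvg_shiftS (fun N : nat => (\sum_(n < N) e n) / N%:R)).
  exact: (cvgM (cvg_cst (2:R)) cv0).
have : t * c <= 2 * 0.
  apply: ler_cvg_to cu cv _.
  near=> N.
  have N1 : (1 <= N%:R :> R) by rewrite ler1n; near: N; exists 1%N.
  set E := \sum_(n < N.+1) e n.
  have E0 : 0 <= E by apply: sumr_ge0 => i _; apply: he.
  have h1 : t * \sum_(n < N) b n <= E.
    rewrite /E big_ord_recl /= mulr_sumr.
    apply: (@le_trans _ _ (\sum_(i < N) e i.+1)).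
      by apply: ler_sum => i _; exact: key.
    by rewrite lerDr he.
  rewrite mulrA -natr1.
  apply: (@le_trans _ _ (E / N%:R)).
    by apply: ler_wpM2r => //; rewrite invr_ge0 (le_trans _ N1).
  rewrite mulrA [2 * E]mulrC -mulrA; apply: ler_wpM2l => //.
  rewrite -[N.+1%:R]natr1; exact: inv_le2.
rewrite mulr0 => h; have : 0 < t * c by apply: mulr_gt0.
by rewrite ltNge h.
Unshelve. all: by end_near.
Qed.

Lemma mu_fin (R : realType) (mu : probability OmegaB R) (A : set OmegaB) :
  measurable A -> mu A = (fine (mu A))%:E.
Proof.
move=> mA; rewrite fineK // ge0_fin_numE ?measure_ge0 //.
by apply: le_lt_trans (probability_le1 _ mA) _; rewrite ltey.
Qed.

Lemma iter_cont n : continuous (iter n sh : cantor_space -> cantor_space).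
Proof.
elim: n => [|n IH] x /=; first exact: cvg_id.
change (continuous_at x (sh \o iter n sh)).
apply: continuous_comp; [exact: IH | exact: sh_cont].
Qed.

Lemma mu_fine_le (R : realType) (mu : probability OmegaB R) (A B : set OmegaB) :
  measurable A -> measurable B -> A `<=` B -> fine (mu A) <= fine (mu B).
Proof.
move=> mA mB AB; have := le_measure mu (mem_set mA) (mem_set mB) AB.
have fin : forall C : set OmegaB, measurable C -> mu C \is a fin_num.
  by move=> C mC; rewrite (mu_fin mu mC).
by apply: fine_le; apply: fin.
Qed.

Section Main.
Variables (R : realType) (S : set nat) (mu : probability OmegaB R).
Let xi := Defs.indic S.
Let X := orbit_closure xi.
Hypothesis gen : generic X mu xi.

Lemma measX : measurable (X : set OmegaB).
Proof. apply: meas_closed; rewrite /X /orbit_closure; exact: closed_closure. Qed.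

Lemma meas_cylX L : measurable (cyl L `&` X : set OmegaB).
Proof. apply: measurableI; [exact: meas_open (open_cyl L)|exact: measX]. Qed.

Lemma gen_cyl L : (fun N : nat => (\sum_(n < N) (\1_(cyl L) (iter n sh xi) : R)) / N%:R)
   @ \oo --> fine (mu (cyl L `&` X)).
Proof.
have hc : {within X, continuous (\1_(cyl L) : cantor_space -> R)}.
  by apply: continuous_subspaceT; exact: cont_indic.
have := gen hc.
rewrite integral_indic; last 2 first.
- exact: measX.
- exact: meas_open (open_cyl L).
move=> h.
apply: (@fine_cvg _ _ _ _ (fun N : nat => ((\sum_(n < N) (\1_(cyl L) (iter n sh xi) : R)) / N%:R)%:E)).
by rewrite -(mu_fin mu (meas_cylX L)).
Qed.

Hypothesis wm : weakly_mixing X mu.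

Lemma closedX : closed X.
Proof. rewrite /X /orbit_closure; exact: closed_closure. Qed.

Lemma step L : 0 < fine (mu (cyl L `&` X)) ->
  exists p, (0 < p)%N /\ (forall j, j \in L -> S (p + j)%N) /\
    0 < fine (mu (cyl (L ++ [seq (j + p)%N | j <- L]) `&` X)).
Proof.
set c := fine (mu (cyl L `&` X)) => c0.
have mA := meas_cylX L.
have := wm mA mA (@subIsetr _ _ _) (@subIsetr _ _ _).
move=> we.
pose e := fun n : nat => `| fine (mu ((cyl L `&` X) `&` (X `&` (iter n sh) @^-1` (cyl L `&` X)))) - c * c|.
have hb : forall n, 0 <= (\1_(cyl L) (iter n sh xi) : R) <= 1.
  by move=> n; rewrite /indic; case: (_ \in _) => /=; rewrite ?lexx ?ler01.
have cb := @gen_cyl L.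
have [m [bm em]] := @comb R (fun n => (\1_(cyl L) (iter n sh xi) : R)) e c (c * c)
  c0 (mulr_gt0 c0 c0) hb (fun n => normr_ge0 _) cb we.
exists m.+1; split => //.
have inL : cyl L (iter m sh xi).
  move: bm; rewrite /indic; case: (boolP (_ \in _)) => [/set_mem //|_].
  by rewrite eqxx.
split.
  move=> j /inL; rewrite iter_sh /xi /Defs.indic => /asboolP.
  by rewrite addSn addnC.
set W := (cyl L `&` X) `&` (X `&` iter m.+1 sh @^-1` (cyl L `&` X)).
have Wpos : 0 < fine (mu W).
  move: em; rewrite /e /= ltr_norml => /andP[+ _].
  rewrite -/c => h; lra.
have mW : measurable (W : set OmegaB).
  apply: meas_closed; apply: closedI; first by apply: closedI; [exact: closed_cyl|exact: closedX].
  apply: closedI; first exact: closedX.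
  move: (@iter_cont m.+1) => /continuous_closedP; apply.
  by apply: closedI; [exact: closed_cyl|exact: closedX].
set L' := L ++ _.
have mL' := meas_cylX L'.
have sub : W `<=` cyl L' `&` X.
  move=> x [[xL xX] [_ [yL _]]]; split => // j; rewrite mem_cat => /orP[/xL //|].
  case/mapP => k kL ->; have := yL k kL; by rewrite iter_sh.
exact: lt_le_trans Wpos (mu_fine_le mu mW mL' sub).
Qed.

Lemma base (d : R) : has_density S d -> 0 < d -> 0 < fine (mu (cyl [:: 0%N] `&` X)).
Proof.
move=> hd d0.
have h1 := @gen_cyl [:: 0%N].
have E : (fun N : nat => (\sum_(n < N) (\1_(cyl [:: 0%N]) (iter n sh xi) : R)) / N%:R) =
   (fun N : nat => (\sum_(k < N) (if `[< S k.+1 >] then 1 else 0 : R)) / N%:R).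
  apply/funext => N; congr (_ / _); apply: eq_bigr => k _.
  rewrite /indic; case: (boolP (_ \in _)) => [/set_mem|] hin; case: asboolP => //= hS.
  - by exfalso; apply: hS; have := hin 0%N (mem_head _ _); rewrite iter_sh /xi /Defs.indic => /asboolP.
  - exfalso; move/negP: hin; apply; apply/mem_set => j; rewrite inE => /eqP ->.
    by rewrite iter_sh /xi /Defs.indic; apply/asboolP.
rewrite E in h1.
by rewrite (cvg_unique _ h1 hd).
Qed.
End Main.

Lemma sorted_rcons_ltn (t : seq nat) a : sorted ltn (rcons t a) ->
  sorted ltn t /\ all (fun x => (x < a)%N) t.
Proof.
rewrite !(sorted_pairwise ltn_trans) -cats1 pairwise_cat /= andbT.
by case/andP; rewrite allrel1r.
Qed.


Theorem mainTheorem7 (R : realType) (S : set nat) :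
  S `<=` [set n | (0 < n)%N] -> WM_set R S -> contains_IP_set S.
Proof.
move=> _ [mu [_ [gen [wm [d [hd d0]]]]]].
set X := orbit_closure (Defs.indic S).
have b0 := base gen hd d0.
pose P := fun L p => (0 < p)%N /\ (forall j, j \in L -> S (p + j)%N) /\
    0 < fine (mu (cyl (L ++ [seq (j + p)%N | j <- L]) `&` X)).
have [f hf] : {f : seq nat -> nat & forall L, 0 < fine (mu (cyl L `&` X)) -> P L (f L)}.
  apply: (@choice _ _ (fun L p => 0 < fine (mu (cyl L `&` X)) -> P L p)) => L.
  case: (pselect (0 < fine (mu (cyl L `&` X)))) => [h|h].
    by have [p hp] := step gen wm h; exists p.
  by exists 0%N.
pose Ls := fix Ls k := if k is k'.+1 then Ls k' ++ [seq (j + f (Ls k'))%N | j <- Ls k']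
  else [:: 0%N].
have inv : forall k, 0 < fine (mu (cyl (Ls k) `&` X)).
  elim => [//|k IH]; have [_ [_ h]] := hf _ IH; exact: h.
have mono : forall k n, {subset Ls k <= Ls (n + k)%N}.
  move=> k; elim => [|n IH] j; first by [].
  by move=> /IH; rewrite addSn /= mem_cat => ->.
have sums : forall t k, sorted ltn t -> all (fun x => (x < k)%N) t ->
    (\sum_(i <- t) f (Ls i))%N \in Ls k.
  elim/last_ind => [k _ _|t a IH k].
    rewrite big_nil; have := @mono 0%N k 0%N; rewrite addn0; apply.
    by rewrite mem_head.
  move=> /sorted_rcons_ltn [st at'].
  rewrite all_rcons => /andP[ak _].
  rewrite big_rcons /=.
  have h : (\sum_(i <- t) f (Ls i) + f (Ls a))%N \in Ls a.+1.
    by rewrite /= mem_cat; apply/orP; right; apply: map_f; apply: IH.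
  have := @mono a.+1 (k - a.+1)%N _ h; rewrite subnK //.
exists (fun k => f (Ls k)); split.
  by move=> i; have [h _] := hf _ (inv i).
move=> s; case/lastP: s => [//|t a] _ /sorted_rcons_ltn [st at'].
rewrite big_rcons /= addnC.
have [_ [h _]] := hf _ (inv a); apply: h.
exact: sums.
Qed.
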